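(* Let $n\ge4$ be even. For each $1\le j\le n-1$, the map $\nu_j:Y_1\to Y_j$, $x\mapsto\sigma_jx\sigma_j^{-1}$, is an order-preserving one-to-one mapping (with respect to the Bruhat order of $\mathcal F_n$ restricted to $Y_1$ and $Y_j$).
   Context: $s_i=(i,i+1)$; permutations compose right to left. $\mathcal F_m$ is the set of fixed-point-free involutions in $S_m$ with conjugation action, height $\ell/2$, and Bruhat order the weakest partial order with $z\le tzt$ for transpositions $t$ with $\ell(z)\le\ell(tzt)$. Regard $\mathcal F_{n-2}\subset S_n$; $w_0$ longest element of $S_n$; $Y_1=\{w_0zs_{n-1}w_0:z\in\mathcal F_{n-2}\}$; $\sigma_j=s_js_{j-1}\cdots s_1$; $Y_j=\sigma_jY_1\sigma_j^{-1}$. *)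

(* Defs.v *)
From mathcomp Require Import all_boot all_fingroup.
Unset Printing Implicit Defensive.

Local Open Scope group_scope.

(* The paper's points 1..n are the ordinals 0..n-1 of 'I_n.
   MathComp multiplies permutations left-to-right ((p * q) x = q (p x)),
   so the paper's right-to-left product a b is the MathComp product b * a,
   and the paper's conjugate x |-> g x g^-1 is MathComp's x ^ g = g^-1 * x * g. *)

(* simple transposition s_i = (i, i+1), paper indexing 1 <= i <= n-1
   (0-indexed: swaps i-1 and i); identity for out-of-range i *)
Definition s (n i : nat) : 'S_n :=
  match (insub i.-1 : option 'I_n), (insub i : option 'I_n) with
  | Some a, Some b => tperm a b
  | _, _ => 1
  end.

Definition w0 (n : nat) : 'S_n := perm (@rev_ord_inj n).

(* sigma_j = s_j s_{j-1} ... s_1 (right to left) = s_1 * s_2 * ... * s_j in MathComp *)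
Definition sigma (n j : nat) : 'S_n := \prod_(1 <= i < j.+1) s n i.

Definition len (n : nat) (z : 'S_n) : nat :=
  #|[set p : 'I_n * 'I_n | (p.1 < p.2)%N && (z p.2 < z p.1)%N]|.

Definition FPF (n : nat) : {set 'S_n} :=
  [set z : 'S_n | [forall i, z (z i) == i] && [forall i, z i != i]].

(* F_{n-2} regarded inside S_n: fpf involutions of the first n-2 points,
   fixing the last two points n-1, n *)
Definition Fsub (n : nat) : {set 'S_n} :=
  [set z : 'S_n | [forall i, z (z i) == i] &&
     [forall i : 'I_n, if (i < n - 2)%N then z i != i else z i == i]].

(* Y_1 = { w0 z s_{n-1} w0 : z in F_{n-2} } *)
Definition Y1 (n : nat) : {set 'S_n} :=
  [set w0 n * s n n.-1 * z * w0 n | z in Fsub n].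

Definition Y (n j : nat) : {set 'S_n} := [set x ^ sigma n j | x in Y1 n].

Definition nu (n j : nat) (x : 'S_n) : 'S_n := x ^ sigma n j.

Definition bruhat_step (n : nat) : rel 'S_n := fun z z' =>
  [&& z \in FPF n,
      [exists a : 'I_n, exists b : 'I_n,
         (a != b) && (z' == tperm a b * z * tperm a b)]
    & (len n z <= len n z')%N].

Definition bruhat (n : nat) : rel 'S_n := connect (bruhat_step n).

(* Main.v *)
Require Import Defs.
From mathcomp Require Import all_boot all_fingroup zify.
Set Implicit Arguments. Unset Strict Implicit.

Definition G (n : nat) (z : 'S_n) (p q : 'I_n) : nat := (p < q) && (z q < z p).

Lemma lenE n (z : 'S_n) : len n z = \sum_p \sum_q G z p q.
Proof.
rewrite /len -sum1dep_card big_mkcond /= pair_big /=.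
by apply: eq_bigr => -[p q] _ /=; rewrite /G; case: ifP.
Qed.

Lemma sum_lt n j : \sum_(i < n) (i < j : nat) = minn n j.
Proof.
elim: n => [|n IH]; first by rewrite big_ord0 min0n.
rewrite big_ord_recr /= IH.
case: (ltnP n j) => H; lia.
Qed.

Lemma split1 n (a : 'I_n) (P : pred 'I_n) (f : 'I_n -> nat) : P a ->
  \sum_(p | P p) f p = f a + \sum_(p | P p && (p != a)) f p.
Proof. by move=> Pa; rewrite (bigD1 a). Qed.

Lemma s_val n i (x : 'I_n) : 0 < i < n ->
  val (s n i x) = if val x == i.-1 then i else if val x == i then i.-1 else val x.
Proof.
move=> Hi; rewrite /s.
case: insubP => [a _ Ea|]; last by move=> /negP; case; lia.
case: insubP => [b _ Eb|]; last by move=> /negP; case; lia.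
case: tpermP => [->|->|/eqP Ha /eqP Hb]; rewrite ?Ea ?Eb.
- by rewrite eqxx.
- repeat case: ifP; lia.
- rewrite -Ea -Eb !(inj_eq val_inj) (negbTE Ha) (negbTE Hb) //.
Qed.

Lemma sigma_val n j (x : 'I_n) : j < n ->
  val (sigma n j x) = if val x == 0 then j else if val x <= j then (val x).-1 else val x.
Proof.
elim: j => [|j IH] Hj.
  rewrite /sigma big_geq // perm1; case: ifP => [/eqP -> //|]; case: ifP => //; lia.
rewrite /sigma big_nat_recr //= -/(sigma n j) permM s_val; last by lia.
have H := IH (ltnW Hj); change (\val x) with (nat_of_ord x) in H.
move: H; move: (val (sigma n j x)) (nat_of_ord x) => y z.
repeat case: ifP; lia.
Qed.

Lemma sigma_val' n j (x : 'I_n) : j < n ->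
  nat_of_ord (sigma n j x) = if nat_of_ord x == 0 then j else if nat_of_ord x <= j then (nat_of_ord x).-1 else nat_of_ord x.
Proof. exact: sigma_val. Qed.

Section Two.
Variables (n : nat) (o0 o1 : 'I_n).
Hypotheses (H0 : nat_of_ord o0 = 0) (H1 : nat_of_ord o1 = 1).

Lemma split2 (f : 'I_n -> nat) :
  \sum_p f p = f o0 + f o1 + \sum_(p : 'I_n | 1 < p) f p.
Proof.
rewrite (bigD1 o0) // (bigD1 o1) /=; last by rewrite -(inj_eq (@ord_inj n)) H0 H1.
rewrite addnA; congr (_ + _); apply: eq_bigl => p.
rewrite -!(inj_eq (@ord_inj n)) H0 H1 /=; case: (nat_of_ord p) => [|[|k]] //.
Qed.

Lemma split22 (F : 'I_n -> 'I_n -> nat) :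
  \sum_p \sum_q F p q =
  F o0 o0 + F o0 o1 + \sum_(q : 'I_n | 1 < q) F o0 q +
  (F o1 o0 + F o1 o1 + \sum_(q : 'I_n | 1 < q) F o1 q) +
  \sum_(p : 'I_n | 1 < p) (F p o0 + F p o1 + \sum_(q : 'I_n | 1 < q) F p q).
Proof.
rewrite split2 !split2; congr (_ + _); apply: eq_bigr => p _; exact: split2.
Qed.

Lemma o01 : o0 != o1. Proof. by rewrite -(inj_eq (@ord_inj n)) H0 H1. Qed.

Lemma count_g (g : 'S_n) (J : 'I_n) : \sum_p (g p < J : nat) = J.
Proof.
rewrite (reindex_inj (@perm_inj _ g^-1)) /=.
under eq_bigr do rewrite permKV.
rewrite sum_lt; apply/minn_idPr; exact: ltnW.
Qed.

Lemma lenD (J : 'I_n) (u g : 'S_n) : 0 < val J ->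
  u o0 = o1 -> u o1 = o0 -> g o0 = J -> g o1 = o0 ->
  (forall p q : 'I_n, 0 < p -> 0 < q -> (g p < g q) = (p < q)) ->
  len n (u ^ g)%g = len n u + 2 * (val J - 1).
Proof.
move=> HJ u0 u1 g0 g1 mono.
have uq0 : forall q : 'I_n, 1 < q -> 0 < u q.
  move=> q Hq; rewrite lt0n; apply/eqP => E.
  have : u q = u o1 by apply: ord_inj; rewrite u1 E H0.
  by move/perm_inj => Eq; move: Hq; rewrite Eq H1.
have gq0 : forall q : 'I_n, 1 < q -> 0 < g q.
  move=> q Hq; rewrite lt0n; apply/eqP => E.
  have : g q = g o1 by apply: ord_inj; rewrite g1 E H0.
  by move/perm_inj => Eq; move: Hq; rewrite Eq H1.
have E1 : len n (u ^ g)%g = \sum_p \sum_q ((g p < g q) && (g (u q) < g (u p)) : nat).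
  rewrite lenE (reindex_inj (@perm_inj _ g)) /=; apply: eq_bigr => p0 _.
  rewrite (reindex_inj (@perm_inj _ g)) /=; apply: eq_bigr => q0 _.
  by rewrite /G !permJ.

rewrite E1 lenE !split22 /G u0 u1 g0 g1 !H0 !H1 /= ltnn.
have gu0 : forall p : 'I_n, 0 < p -> 0 < g (u p).
  move=> p Hp; rewrite lt0n; apply/eqP => E.
  have : g (u p) = g (u o0) by apply: ord_inj; rewrite u0 g1 E H0.
  by move/perm_inj/perm_inj => Eq; move: Hp; rewrite Eq H0.
have S1 : \sum_(q : 'I_n | 1 < q) ((J < g q) && (g (u q) < 0) : nat) = 0.
  by apply: big1 => q _; rewrite ltn0 andbF.
have S2 : \sum_(q : 'I_n | 1 < q) ((0 < g q) && (g (u q) < J) : nat)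
   = \sum_(q : 'I_n | 1 < q) (g (u q) < J : nat).
  by apply: eq_bigr => q Hq; rewrite gq0.
have S3 : \sum_(q : 'I_n | 1 < q) ((0 < q) && (u q < 1) : nat) = 0.
  by apply: big1 => q Hq; have := uq0 q Hq; lia.
have S4 : \sum_(q : 'I_n | 1 < q) ((1 < q) && (u q < 0) : nat) = 0.
  by apply: big1 => q _; rewrite ltn0 andbF.
have S5 : \sum_(p : 'I_n | 1 < p)
     ((g p < J) && (0 < g (u p)) + 0 +
      \sum_(q : 'I_n | 1 < q) ((g p < g q) && (g (u q) < g (u p)) : nat)) =
     \sum_(p : 'I_n | 1 < p) (g p < J : nat) +
     \sum_(p : 'I_n | 1 < p) \sum_(q : 'I_n | 1 < q) ((p < q) && (u q < u p) : nat).
  rewrite -big_split; apply: eq_bigr => p Hp /=.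
  have Hp0 : 0 < p by apply: ltn_trans Hp.
  rewrite gu0 // andbT addn0; congr (_ + _); apply: eq_bigr => q Hq.
  have Hq0 : 0 < q by apply: ltn_trans Hq.
  by rewrite !mono // ?uq0.
have S6 : \sum_(p : 'I_n | 1 < p)
     (0 + (p < 1 <= u p) + \sum_(q : 'I_n | 1 < q) ((p < q) && (u q < u p) : nat)) =
     \sum_(p : 'I_n | 1 < p) \sum_(q : 'I_n | 1 < q) ((p < q) && (u q < u p) : nat).
  apply: eq_bigr => p Hp /=.
  have -> : (p < 1) = false by apply/negbTE; rewrite -leqNgt ltnW.
  by [].
have C1 : \sum_(q : 'I_n | 1 < q) (g (u q) < J : nat) = J - 1.
  have := count_g (u * g) J; rewrite split2 !permM u0 u1 g0 g1 H0 HJ ltnn.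
  under eq_bigr do rewrite permM.
  move=> E3; by rewrite -[in RHS]E3 /= addn0 add1n subn1.
have C2 : \sum_(p : 'I_n | 1 < p) (g p < J : nat) = J - 1.
  have := count_g g J; rewrite split2 g0 g1 H0 HJ ltnn.
  move=> E2; by rewrite -[in RHS]E2 /= add0n add1n subn1.
rewrite S1 S2 S3 S4 S5 S6 C1 C2 /=.
have HJ2 : 0 < (J : nat) by []. rewrite HJ2; lia.
Qed.
End Two.

Section Four.
Variables (n : nat) (o0 o1 x y : 'I_n).
Hypotheses (H0 : nat_of_ord o0 = 0) (H1 : nat_of_ord o1 = 1)
  (Hx : 1 < x) (Hy : 1 < y) (Hxy : (x : nat) != y).

Definition notS (p : 'I_n) := [&& 1 < p, p != x & p != y].

Lemma split4 (f : 'I_n -> nat) :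
  \sum_p f p = f o0 + f o1 + f x + f y + \sum_(p | notS p) f p.
Proof.
rewrite (split2 H0 H1) (bigD1 x) // (bigD1 y) /=; last first.
  by rewrite Hy /= -(inj_eq (@ord_inj n)) eq_sym.
rewrite !addnA; congr (_ + _); apply: eq_bigl => p; rewrite /notS; case: (1 < p) => //.
Qed.

Definition SS (w : 'S_n) :=
  G w o0 o0 + G w o0 o1 + G w o0 x + G w o0 y +
  (G w o1 o0 + G w o1 o1 + G w o1 x + G w o1 y) +
  (G w x o0 + G w x o1 + G w x x + G w x y) +
  (G w y o0 + G w y o1 + G w y x + G w y y).
Definition M (w : 'S_n) k :=
  G w o0 k + G w o1 k + G w x k + G w y k + (G w k o0 + G w k o1 + G w k x + G w k y).
Definition II (w : 'S_n) := \sum_(p | notS p) \sum_(q | notS q) G w p q.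

Lemma lenS w : len n w = SS w + \sum_(k | notS k) M w k + II w.
Proof.
rewrite lenE split4 !split4 /II /SS /M big_split /=.
have -> : \sum_(p | notS p) \sum_q G w p q =
  \sum_(p | notS p) (G w p o0 + G w p o1 + G w p x + G w p y) + II w.
  by rewrite /II -big_split; apply: eq_bigr => p _; rewrite split4.
rewrite !big_split /= /II.
set a1 := \sum_(i | notS i) G w o0 i. set a2 := \sum_(i | notS i) G w o1 i.
set a3 := \sum_(i | notS i) G w x i. set a4 := \sum_(i | notS i) G w y i.
set b1 := \sum_(i | notS i) G w i o0. set b2 := \sum_(i | notS i) G w i o1.
set b3 := \sum_(i | notS i) G w i x. set b4 := \sum_(i | notS i) G w i y.
set c := \sum_(p | notS p) _.
lia.
Qed.

Lemma A_core (u v : 'S_n) : u o0 = x -> u x = o0 -> u o1 = y -> u y = o1 ->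
  v o0 = o1 -> v o1 = o0 -> v x = y -> v y = x ->
  (forall k, notS k -> v k = u k) -> len n v < len n u.
Proof.
move=> u0 ux u1 uy v0 v1 vx vy Hvu.
rewrite !lenS.
have EI : II v = II u.
  by apply: eq_bigr => p Hp; apply: eq_bigr => q Hq; rewrite /G !Hvu.
have EM : \sum_(k | notS k) M v k <= \sum_(k | notS k) M u k.
  apply: leq_sum => k Hk; rewrite /M /G u0 u1 ux uy v0 v1 vx vy Hvu //.
  move: Hk; rewrite /notS => /and3P [k1 kx ky].
  have k0 : k != o0 by rewrite -(inj_eq (@ord_inj n)) H0; case: (nat_of_ord k) k1.
  have k1' : k != o1 by rewrite -(inj_eq (@ord_inj n)) H1; case: (nat_of_ord k) k1 => [|[]].
  have e1 : u k != u o0 by rewrite (inj_eq (@perm_inj _ u)).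
  have e2 : u k != u o1 by rewrite (inj_eq (@perm_inj _ u)).
  have e3 : u k != u x by rewrite (inj_eq (@perm_inj _ u)).
  have e4 : u k != u y by rewrite (inj_eq (@perm_inj _ u)).
  move: e1 e2 e3 e4 kx ky; rewrite u0 u1 ux uy -!(inj_eq (@ord_inj n)) H0 H1.
  move: Hxy Hx Hy k1; lia.
have ESS : SS v < SS u.
  rewrite /SS /G u0 u1 ux uy v0 v1 vx vy H0 H1; move: Hxy Hx Hy; lia.
move: EM ESS; rewrite EI; lia.
Qed.
End Four.

Lemma stepA n (o0 o1 : 'I_n) (H0 : nat_of_ord o0 = 0) (H1 : nat_of_ord o1 = 1)
  (a : 'S_n) (c d : 'I_n) :
  a \in FPF n -> (tperm c d * a * tperm c d)%g o0 = o1 ->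
  len n a <= len n (tperm c d * a * tperm c d)%g -> a o0 = o1.
Proof.
rewrite inE => /andP [/forallP aa /forallP an].
have aaE : forall i, a (a i) = i by move=> i; apply/eqP.
move=> Hv Hlen.
case: (eqVneq (a o0) o1) => // nX; exfalso.
have o01 : o0 != o1 by rewrite -(inj_eq (@ord_inj n)) H0 H1.
have gt1 : forall k : 'I_n, k != o0 -> k != o1 -> 1 < k.
  move=> k; rewrite -!(inj_eq (@ord_inj n)) H0 H1; case: (nat_of_ord k) => [|[|]] //.
move eX : (a o0) nX => X X1.
move eY : (a o1) => Y.
have aX : a X = o0 by rewrite -eX aaE.
have aY : a Y = o1 by rewrite -eY aaE.
have X0 : X != o0 by rewrite -eX an.
have Y1 : Y != o1 by rewrite -eY an.
have Y0 : Y != o0 by apply: contra_neq X1 => E; rewrite -eX -E aY.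
have XY : X != Y by rewrite -eX -eY (inj_eq (@perm_inj _ a)).
have X0' : o0 != X by rewrite eq_sym.
have X1' : o1 != X by rewrite eq_sym.
have Y0' : o0 != Y by rewrite eq_sym.
have Y1' : o1 != Y by rewrite eq_sym.
have YX : Y != X by rewrite eq_sym.
have o10 : o1 != o0 by rewrite eq_sym.
have Xg : 1 < X by apply: gt1.
have Yg : 1 < Y by apply: gt1.
have XYn : (X : nat) != Y by rewrite (inj_eq (@ord_inj n)).
have notSa : forall k, notS X Y k -> [/\ k != o0, k != o1, k != X, k != Y & notS X Y (a k)].
  move=> k /and3P [k1 kX kY].
  have k0 : k != o0 by rewrite -(inj_eq (@ord_inj n)) H0; case: (nat_of_ord k) k1.
  have k1' : k != o1 by rewrite -(inj_eq (@ord_inj n)) H1; case: (nat_of_ord k) k1 => [|[]].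
  split => //; apply/and3P; split.
  - apply: gt1.
    + by rewrite -aX (inj_eq (@perm_inj _ a)).
    + by rewrite -aY (inj_eq (@perm_inj _ a)).
  - by rewrite -(aaE X) aX (inj_eq (@perm_inj _ a)).
  - by rewrite -(aaE Y) aY (inj_eq (@perm_inj _ a)).
have main : forall cc dd : 'I_n, cc != dd -> (cc == o0) || (cc == o1) ->
    (tperm cc dd * a * tperm cc dd)%g o0 = o1 ->
    len n a <= len n (tperm cc dd * a * tperm cc dd)%g -> False.
  move=> cc dd ncd Hc.
  set v := (tperm cc dd * a * tperm cc dd)%g.
  have vE : forall k, v k = tperm cc dd (a (tperm cc dd k)) by move=> k; rewrite !permM.
  move=> Hv2 Hlen2.
  case/orP: Hc => /eqP Ec; subst cc.
  - case: (eqVneq dd o1) => [Ed | d1].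
      subst dd; move: Hv2; rewrite vE tpermL eY tpermD //.
      by move=> E; move: Y1; rewrite E eqxx.
    have t1 : tperm o0 dd o1 = o1 by rewrite tpermD // eq_sym.
    have ad : a dd = o1.
      by move: Hv2; rewrite vE tpermL => E; rewrite -(tpermK o0 dd (a dd)) E t1.
    have dY : dd = Y by rewrite -(aaE dd) ad eY.
    subst dd.
    have vo1 : v o1 = o0 by rewrite vE t1 eY tpermR.
    have vX : v X = Y by rewrite vE (tpermD X0' YX) aX tpermL.
    have vY : v Y = X by rewrite vE tpermR eX (tpermD X0' YX).
    have vk : forall k, notS X Y k -> v k = a k.
      move=> k /notSa [k0 k1 kX kY /notSa [ak0 _ _ akY _]].
      have tk : tperm o0 Y k = k by apply: tpermD; rewrite eq_sym.
      have tak : tperm o0 Y (a k) = a k by apply: tpermD; rewrite eq_sym.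
      by rewrite vE tk tak.
    have := A_core H0 H1 Xg Yg XYn eX aX eY aY Hv2 vo1 vX vY vk.
    by rewrite ltnNge Hlen2.
  - case: (eqVneq dd o0) => [Ed | d0].
      subst dd; move: Hv2; rewrite vE tpermR eY tpermD //.
      by move=> E; move: Y1; rewrite E eqxx.
    have t0 : tperm o1 dd o0 = o0 by apply: tpermD; rewrite // eq_sym.
    have dX : dd = X.
      by move: Hv2; rewrite vE t0 eX => E; rewrite -(tpermK o1 dd X) E tpermL.
    subst dd.
    have vo1 : v o1 = o0 by rewrite vE tpermL aX t0.
    have vX : v X = Y by rewrite vE tpermR eY (tpermD Y1' XY).
    have vY : v Y = X by rewrite vE (tpermD Y1' XY) aY tpermL.
    have vk : forall k, notS X Y k -> v k = a k.
      move=> k /notSa [k0 k1 kX kY /notSa [_ ak1 akX _ _]].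
      have tk : tperm o1 X k = k by apply: tpermD; rewrite eq_sym.
      have tak : tperm o1 X (a k) = a k by apply: tpermD; rewrite eq_sym.
      by rewrite vE tk tak.
    have := A_core H0 H1 Xg Yg XYn eX aX eY aY Hv2 vo1 vX vY vk.
    by rewrite ltnNge Hlen2.
case: (eqVneq c d) => [Ecd | ncd].
  by move: Hv; rewrite Ecd tperm1 mulg1 mul1g eX => E; move: X1; rewrite E eqxx.
case: (boolP ((c == o0) || (c == o1))) => Hc; first exact: main Hv Hlen.
case: (boolP ((d == o0) || (d == o1))) => Hd.
  by apply: (main d c); [rewrite eq_sym | | rewrite tpermC | rewrite tpermC].
move: Hc Hd; rewrite !negb_or => /andP [c0 c1] /andP [d0 d1].
move: Hv; rewrite !permM (tpermD c0 d0) eX => E.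
by move: X1; rewrite -(tpermK c d X) E (tpermD c1 d1) eqxx.
Qed.

Section Y1.
Variable n : nat.
Hypothesis Hn : 2 <= n.
Let sl := s n n.-1.

Lemma sl_val (m : 'I_n) : nat_of_ord (sl m) =
  if nat_of_ord m == n - 2 then n - 1 else if nat_of_ord m == n - 1 then n - 2 else m.
Proof.
rewrite /sl s_val; last by lia.
have -> : n.-1.-1 = n - 2 by lia.
by have -> : n.-1 = n - 1 by lia.
Qed.

Lemma slP (m : 'I_n) : m < n - 2 -> sl m = m.
Proof. move=> H; apply: ord_inj; rewrite sl_val; repeat case: ifP; lia. Qed.

Lemma slK (m : 'I_n) : sl (sl m) = m.
Proof.
apply: ord_inj; rewrite !sl_val; have := ltn_ord m.
move: (nat_of_ord m) => k; repeat case: ifP; lia.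
Qed.

Lemma slNP (m : 'I_n) : ~~ (m < n - 2) -> ~~ (sl m < n - 2) /\ sl m != m.
Proof.
move=> H; rewrite -(inj_eq (@ord_inj n)) sl_val; have := ltn_ord m; move: H.
move: (nat_of_ord m) => k; repeat case: ifP; lia.
Qed.

Lemma w0E (k : 'I_n) : w0 n k = rev_ord k.
Proof. by rewrite /w0 permE. Qed.

Lemma w0K (k : 'I_n) : w0 n (w0 n k) = k.
Proof. by rewrite !w0E rev_ordK. Qed.

Lemma Y1P (o0 o1 : 'I_n) : nat_of_ord o0 = 0 -> nat_of_ord o1 = 1 ->
  forall u, u \in Y1 n -> u \in FPF n /\ u o0 = o1.
Proof.
move=> H0 H1 u /imsetP [z Hz ->].
move: Hz; rewrite inE => /andP [/forallP zz /forallP zP].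
have zzE : forall i, z (z i) = i by move=> i; apply/eqP.
have zF : forall i : 'I_n, ~~ (i < n - 2) -> z i = i.
  by move=> i Hi; move: (zP i); rewrite (negbTE Hi) => /eqP.
have zM : forall i : 'I_n, i < n - 2 -> z i != i.
  by move=> i Hi; move: (zP i); rewrite Hi.
have zPP : forall i : 'I_n, i < n - 2 -> z i < n - 2.
  move=> i Hi; apply/negP => /negP Hzi.
  have := zF _ Hzi; rewrite zzE => E; by move: (zM i Hi); rewrite -E eqxx.
have uE : forall k, (w0 n * sl * z * w0 n)%g k = w0 n (z (sl (w0 n k))).
  by move=> k; rewrite !permM.
have key : forall m, z (sl (z (sl m))) = m.
  move=> m; case: (boolP (m < n - 2)) => Hm.
    by rewrite (slP Hm) (slP (zPP _ Hm)) zzE.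
  have [H2 _] := slNP Hm.
  by rewrite (zF _ H2) slK zF.
split.
  rewrite inE; apply/andP; split; apply/forallP => k.
    by rewrite !uE w0K key w0K.
  rewrite uE; apply/negP => /eqP E.
  have E2 : z (sl (w0 n k)) = w0 n k by rewrite -{2}E w0K.
  move: E2; case: (boolP (w0 n k < n - 2)) => Hm.
    by rewrite (slP Hm); apply/eqP; apply: zM.
  have [H2 H3] := slNP Hm.
  by rewrite (zF _ H2); apply/eqP.
rewrite uE; apply: ord_inj.
have w00 : nat_of_ord (w0 n o0) = n - 1 by rewrite w0E /= H0; lia.
have s0 : nat_of_ord (sl (w0 n o0)) = n - 2 by rewrite sl_val w00; repeat case: ifP; lia.
rewrite zF; last by rewrite s0 ltnn.
by rewrite w0E /= s0 H1; lia.
Qed.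
End Y1.

Lemma FPF_conj n (u g : 'S_n) : u \in FPF n -> (u ^ g)%g \in FPF n.
Proof.
rewrite !inE => /andP [/forallP uu /forallP un]; apply/andP; split; apply/forallP => k.
  by rewrite -(permKV g k) !permJ (eqP (uu _)).
rewrite -(permKV g k) permJ (inj_eq (@perm_inj _ g)); exact: un.
Qed.

Section Main.
Variables (n j : nat) (o0 o1 : 'I_n).
Hypotheses (H0 : nat_of_ord o0 = 0) (H1 : nat_of_ord o1 = 1) (Hj : 1 <= j) (Hjn : j < n).

Definition P (u : 'S_n) := (u \in FPF n) && (u o0 == o1).

Lemma lenSig (u : 'S_n) : P u -> len n (u ^ sigma n j)%g = len n u + 2 * (j - 1).
Proof.
case/andP => Fu /eqP u0.
have u1 : u o1 = o0.
  by move: Fu; rewrite inE => /andP [/forallP uu _]; rewrite -u0; apply/eqP.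
have := @lenD n o0 o1 H0 H1 (Ordinal Hjn) u (sigma n j) Hj u0 u1.
apply.
- by apply: ord_inj; rewrite sigma_val' // H0.
- by apply: ord_inj; rewrite sigma_val' // H1 H0 /=; case: ifP => //; lia.
- move=> p q Hp Hq; rewrite !sigma_val' //.
  move: Hp Hq; move: (nat_of_ord p) (nat_of_ord q) => a b.
  repeat case: ifP; lia.
Qed.

Lemma stepB (w w' : 'S_n) : P w -> P w' -> bruhat_step n w w' ->
  bruhat_step n (w ^ sigma n j)%g (w' ^ sigma n j)%g.
Proof.
move=> Pw Pw' /and3P [Fw /existsP [c /existsP [d /andP [cd /eqP E]]] Hl].
apply/and3P; split; first exact: FPF_conj.
  apply/existsP; exists (sigma n j c); apply/existsP; exists (sigma n j d).
  rewrite (inj_eq (@perm_inj _ _)) cd /= E !conjMg tpermJ //.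
by rewrite !lenSig // leq_add2r.
Qed.

Lemma pathC p (w : 'S_n) : path (bruhat_step n) w p -> P (last w p) -> P w.
Proof.
elim: p w => [//|a p IH] w /= /andP [ewa pth] Pl.
have Pa := IH _ pth Pl.
move: ewa => /and3P [Fw /existsP [c /existsP [d /andP [cd /eqP E]]] Hl].
move: Pa Hl; rewrite /P E => /andP [_ /eqP Ha] Hl.
rewrite Fw /=; apply/eqP. exact: (stepA H0 H1 Fw Ha).
Qed.

Lemma pathM p (w : 'S_n) : path (bruhat_step n) w p -> P (last w p) -> P w ->
  connect (bruhat_step n) (w ^ sigma n j)%g ((last w p) ^ sigma n j)%g.
Proof.
elim: p w => [|a p IH] w /=; first by move=> *; exact: connect0.
move=> /andP [ewa pth] Pl Pw.
have Pa := pathC pth Pl.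
apply: connect_trans (IH _ pth Pl Pa).
by apply: connect1; apply: stepB.
Qed.
End Main.

Unset Implicit Arguments.
Set Strict Implicit.

Theorem proposition3p5 (n : nat) :
  (4 <= n)%N -> ~~ odd n ->
  forall j : nat, (1 <= j <= n - 1)%N ->
    [/\ {in Y1 n, forall x, nu n j x \in Y n j},
        {in Y1 n &, injective (nu n j)}
      & {in Y1 n &, forall x y, bruhat n x y -> bruhat n (nu n j x) (nu n j y)}].
Proof.
move=> Hn _ j /andP [Hj Hjn].
have Hjn' : j < n by lia.
have h0 : 0 < n by lia.
have h1 : 1 < n by lia.
pose o0 := Ordinal h0. pose o1 := Ordinal h1.
have H0 : nat_of_ord o0 = 0 by [].
have H1 : nat_of_ord o1 = 1 by [].
split.
- by move=> x Hx; rewrite /nu /Y; apply: imset_f.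
- by move=> x y _ _; rewrite /nu; apply: conjg_inj.
move=> x y Hx Hy; rewrite /bruhat /nu => /connectP [p pth Ey]; subst y.
have PY : forall u, u \in Y1 n -> P o0 o1 u.
  move=> u Hu; have [F E] := Y1P (ltnW (ltnW Hn)) H0 H1 Hu.
  by rewrite /P F E eqxx.
apply: (pathM H0 H1 Hj Hjn' pth); exact: PY.
Qed.
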